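(* Let $G$ be a finite group and let $S$ be a set of non-identity arrows of $G$. Let $(K,H)$ be a non-identity arrow of $G$ and let $N=P(K)$. If $(K,H)\in\langle S\rangle$, then there exists a subset $S'\subseteq S_N$ such that $(K,H)\in\langle S'\rangle$ and at most one element of $S'$ is not contained in $S_{N+1}$.
   Context: For a finite group $G$, an arrow is a pair $(K,H)$ of subgroups with $K\leqslant H$; it is an identity arrow if $K=H$. A $G$-transfer system is a set of arrows containing all identity arrows and closed under composition ($(A,B),(B,C)\Rightarrow(A,C)$), conjugation ($(A,B)\Rightarrow(gAg^{-1},gBg^{-1})$ for all $g\in G$) and restriction ($(A,B)$ and $L\leqslant B\Rightarrow(A\cap L,L)$). For a set $S$ of arrows, $\langle S\rangle$ is the smallest transfer system containing $S$. For a subgroup $K$, $P(K)$ is the sum of the exponents in the prime factorization of $|K|$. For $N\in\mathbb{N}$, $S_N=\{(K,H)\in S: P(K)\geqslant N\}$. *)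

(* Defs.v *)
From mathcomp Require Import all_boot all_fingroup.
Set Implicit Arguments. Unset Strict Implicit. Unset Printing Implicit Defensive.
Local Open Scope group_scope.

Notation garrow gT := ({group gT} * {group gT})%type.

Definition is_arrow (gT : finGroupType) (a : garrow gT) : bool := a.1 \subset a.2.

Definition is_identity_arrow (gT : finGroupType) (a : garrow gT) : bool := a.1 == a.2.

(* G-transfer system for G = [set: gT]. *)
Definition transfer_system (gT : finGroupType) (T : {set garrow gT}) : Prop :=
  [/\ (forall a, a \in T -> is_arrow a),
      (forall H : {group gT}, (H, H) \in T),
      (forall A B C : {group gT}, (A, B) \in T -> (B, C) \in T -> (A, C) \in T),
      (forall (A B : {group gT}) (g : gT), (A, B) \in T -> ((A :^ g)%G, (B :^ g)%G) \in T)
    & (forall A B L : {group gT}, (A, B) \in T -> L \subset B -> ((A :&: L)%G, L) \in T)].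

Definition in_gen (gT : finGroupType) (S : {set garrow gT}) (a : garrow gT) : Prop :=
  forall T : {set garrow gT}, transfer_system T -> S \subset T -> a \in T.

Definition Pexp (gT : finGroupType) (K : {group gT}) : nat :=
  \sum_(p <- primes #|K|) logn p #|K|.

Definition Slev (gT : finGroupType) (S : {set garrow gT}) (N : nat) : {set garrow gT} :=
  [set a in S | N <= Pexp a.1].

(* Main.v *)
Require Import Defs.
From mathcomp Require Import all_boot all_fingroup.
From Stdlib Require Import ClassicalEpsilon.
Set Implicit Arguments. Unset Strict Implicit. Unset Printing Implicit Defensive.

Definition fP (n : nat) := \sum_(p <- primes n) logn p n.

Lemma fbound n b : 0 < n -> n < b -> fP n = \sum_(p <- iota 0 b) logn p n.
Proof.
move=> n0 nb; rewrite /fP [in RHS](bigID (mem (primes n))) /=.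
rewrite [X in _ + X]big1 ?addn0; last first.
  by move=> p h; apply/eqP; rewrite -leqn0 leqNgt logn_gt0 (negbTE h).
rewrite -[in RHS]big_filter; apply: perm_big; apply: uniq_perm.
- exact: primes_uniq.
- by rewrite filter_uniq ?iota_uniq.
move=> p; rewrite mem_filter mem_iota /= add0n.
case h: (p \in primes n) => //=; symmetry.
move: h; rewrite mem_primes => /and3P [_ _ d].
exact: leq_ltn_trans (dvdn_leq n0 d) nb.
Qed.

Lemma fmul d k : 0 < d -> 0 < k -> fP (d * k) = fP d + fP k.
Proof.
move=> d0 k0.
have dk0 : 0 < d * k by rewrite muln_gt0 d0.
rewrite (fbound dk0 (ltnSn _)) (fbound d0 (_ : d < (d*k).+1)); last by rewrite ltnS leq_pmulr.
rewrite (fbound k0 (_ : k < (d*k).+1)); last by rewrite ltnS leq_pmull.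
rewrite -big_split /=; apply: eq_bigr => p _; exact: lognM.
Qed.


Lemma fpos k : 1 < k -> 0 < fP k.
Proof.
move=> k1; rewrite /fP.
have hp : pdiv k \in primes k by rewrite mem_primes pdiv_prime // pdiv_dvd ltnW.
rewrite (big_rem _ hp) /=.
by rewrite (leq_trans _ (leq_addr _ _)) // logn_gt0.
Qed.


Lemma fle d n : 0 < n -> d %| n -> fP d <= fP n.
Proof.
move=> n0 /dvdnP [k nE]; subst n; rewrite muln_gt0 in n0; case/andP: n0 => k0 d0.
by rewrite mulnC fmul // leq_addr.
Qed.

Lemma flt d n : 0 < n -> d %| n -> d < n -> fP d < fP n.
Proof.
move=> n0 /dvdnP [k nE]; subst n; rewrite muln_gt0 in n0; case/andP: n0 => k0 d0 lt.
rewrite mulnC fmul // -addn1 leq_add2l fpos //.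
by case: k lt k0 => [|[|k]] //; rewrite mul1n ltnn.
Qed.

Local Open Scope group_scope.

Section Main.
Variable gT : finGroupType.
Implicit Types (S : {set garrow gT}) (A B C L : {group gT}).

Lemma Pexp_conj A g : Pexp (A :^ g)%G = Pexp A.
Proof. by rewrite /Pexp /= cardJg. Qed.

Lemma Pexp_le A B : A \subset B -> Pexp A <= Pexp B.
Proof. move=> h; exact: (fle (cardG_gt0 B) (cardSg h)). Qed.

Lemma Pexp_lt A B : A \subset B -> A != B -> Pexp A < Pexp B.
Proof.
move=> h ne; apply: (flt (cardG_gt0 B) (cardSg h)); apply: proper_card.
by rewrite properEneq h andbT.
Qed.

Lemma Slev_mono S N M : N <= M -> Slev S M \subset Slev S N.
Proof.
move=> NM; apply/subsetP => a; rewrite !inE => /andP [-> h] /=.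
exact: leq_trans h.
Qed.

Lemma in_gen_mono S1 S2 a : S1 \subset S2 -> in_gen S1 a -> in_gen S2 a.
Proof. move=> h g T tT s2; apply: g tT (subset_trans h s2). Qed.

Lemma in_gen_mem S a : a \in S -> in_gen S a.
Proof. by move=> h T _ /subsetP; apply. Qed.

Lemma in_gen_comp S A B C : in_gen S (A, B) -> in_gen S (B, C) -> in_gen S (A, C).
Proof. move=> h1 h2 T tT sT; case: (tT) => _ _ c _ _; exact: c (h1 T tT sT) (h2 T tT sT). Qed.

Lemma in_gen_conj S A B g : in_gen S (A, B) -> in_gen S ((A :^ g)%G, (B :^ g)%G).
Proof. move=> h1 T tT sT; case: (tT) => _ _ _ c _; exact: c (h1 T tT sT). Qed.

Lemma in_gen_res S A B L : in_gen S (A, B) -> L \subset B -> in_gen S ((A :&: L)%G, L).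
Proof. move=> h1 hL T tT sT; case: (tT) => _ _ _ _ c; exact: c (h1 T tT sT) hL. Qed.

Definition pb (P : Prop) : bool := if excluded_middle_informative P then true else false.
Lemma pbP P : reflect P (pb P).
Proof. by rewrite /pb; case: excluded_middle_informative => h; constructor. Qed.

Definition good S A B : Prop := exists S' : {set garrow gT},
    [/\ S' \subset Slev S (Pexp A), in_gen S' (A, B)
      & #|S' :\: Slev S (Pexp A).+1| <= 1].

Definition TT S : {set garrow gT} :=
  [set a : garrow gT | (a.1 \subset a.2) && ((a.1 == a.2) || pb (good S a.1 a.2))].

Lemma inTT S A B : ((A, B) \in TT S) = (A \subset B) && ((A == B) || pb (good S A B)).
Proof. by rewrite inE. Qed.

Lemma TT_ts S : transfer_system (TT S).
Proof.
split.
- by move=> [A B]; rewrite inTT /is_arrow /= => /andP [].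
- by move=> H; rewrite inTT subxx eqxx.
- move=> A B C; rewrite !inTT => /andP [AB eAB] /andP [BC eBC].
  rewrite (subset_trans AB BC) /=.
  case: (eqVneq A B) eAB => [-> _|nAB /= /pbP [S1 [s1 g1 c1]]]; first exact: eBC.
  case: (eqVneq B C) eBC => [<- _|nBC /= /pbP [S2 [s2 g2 c2]]]; first by rewrite (negbTE nAB); apply/pbP; exists S1.
  apply/orP; right; apply/pbP; exists (S1 :|: S2); split.
  + rewrite subUset s1 /=; apply: subset_trans s2 _; apply: Slev_mono; exact: ltnW (Pexp_lt AB nAB).
  + apply: in_gen_comp (in_gen_mono (subsetUl _ _) g1) (in_gen_mono (subsetUr _ _) g2).
  + apply: leq_trans c1; apply: subset_leq_card; apply/subsetP => a.
    rewrite !inE => /andP [na /orP [a1|a2]]; first by rewrite na a1.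
    have : a \in Slev S (Pexp A).+1.
      by apply: (subsetP (Slev_mono S (Pexp_lt AB nAB))); exact: (subsetP s2).
    by rewrite inE (negbTE na).
- move=> A B g; rewrite !inTT => /andP [AB eAB]; rewrite conjSg AB /=.
  case: (eqVneq A B) eAB => [-> _|nAB /= /pbP [S1 [s1 g1 c1]]]; first by rewrite eqxx.
  apply/orP; right; apply/pbP; exists S1; rewrite !Pexp_conj; split => //.
  exact: in_gen_conj.
- move=> A B L; rewrite !inTT => /andP [AB eAB] LB; rewrite subsetIr /=.
  case: (eqVneq A B) eAB => [eq _|nAB /= /pbP [S1 [s1 g1 c1]]].
    apply/orP; left; apply/eqP; apply: val_inj => /=; apply/setIidPr.
    by rewrite eq.
  case: eqP => //= _; apply/pbP; exists S1; split.
  + apply: subset_trans s1 _; apply: Slev_mono; apply: Pexp_le; exact: subsetIl.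
  + exact: (in_gen_res g1 LB).
  + apply: leq_trans c1; apply: subset_leq_card; apply: setDS.
    apply: Slev_mono; rewrite ltnS; apply: Pexp_le; exact: subsetIl.
Qed.

End Main.

Theorem lemma2p12 (gT : finGroupType) (S : {set garrow gT})
  (hS : forall a, a \in S -> is_arrow a && ~~ is_identity_arrow a)
  (K H : {group gT}) (hKH : K \subset H) (hne : K != H) :
  in_gen S (K, H) ->
  exists S' : {set garrow gT},
    [/\ S' \subset Slev S (Pexp K),
        in_gen S' (K, H)
      & #|S' :\: Slev S (Pexp K).+1| <= 1].
Proof.
move=> g.
have : (K, H) \in TT S.
  apply: g; first exact: TT_ts.
  apply/subsetP => -[X Y] aS; rewrite inTT.
  have /andP [XY nXY] := hS _ aS; rewrite /is_arrow /is_identity_arrow /= in XY nXY.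
  rewrite XY (negbTE nXY) /=; apply/pbP; exists [set (X, Y)]; split.
  - by rewrite sub1set inE aS /=.
  - by apply: in_gen_mem; rewrite inE.
  - by rewrite (leq_trans (subset_leq_card (subsetDl _ _))) // cards1.
by rewrite inTT hKH (negbTE hne) /= => /pbP.
Qed.
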